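(* Let a shallow network be given, let $X$ and $Y$ be $\mathbb{R}^{V_0}$- and $\mathbb{R}^{V_2}$-valued random variables, and let $\ell:\mathbb{R}^{V_2}\times\mathbb{R}^{V_2}\to[0,\infty)$ be a $C^1$ function such that $J(\theta)=\mathbb{E}[\ell(\Psi_\theta(X),Y)]$ is $C^1$ on $\Theta$ and differentiation and integration can be interchanged. Let $\theta=(w,\beta)$ exhibit a bias or duplication redundancy, let $\lambda=(\lambda_\emptyset,(\lambda_j)_{j\in V_1})\neq0$ satisfy $\lambda_\emptyset+\sum_{j\in V_1}\lambda_j\psi(\beta_j+\sum_{i\in V_0}x_iw_{ij})=0$ for all $x\in\mathcal{X}$, and define $\theta(t)=(w(t),\beta(t))$, $t\in\mathbb{R}$, by $w_{ij}(t)=w_{ij}$, $\beta_j(t)=\beta_j$ for $i\in V_0,j\in V_1$, and $w_{jk}(t)=w_{jk}+t\lambda_j$, $\beta_k(t)=\beta_k+t\lambda_\emptyset$ for $j\in V_1,k\in V_2$. Then either $\theta(t)$ is a critical point of $J$ for all $t\in\mathbb{R}$, or there is at most one $t\in\mathbb{R}$ for which $\theta(t)$ is a critical point of $J$. If moreover $\#V_2=1$ and $\theta$ has no deactivation redundancy, then $\theta$ being a critical point of $J$ implies that $\theta(t)$ is a critical point of $J$ for all $t\in\mathbb{R}$.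
   Context: Shallow network: finite pairwise disjoint sets $V_0,V_1,V_2$ and activation $\psi$ (differentiable); $E=(V_0\times V_1)\cup(V_1\times V_2)$; $\Theta=\mathbb{R}^E\times\mathbb{R}^{V_1\cup V_2}$, $\theta=(w,\beta)$; response $(\Psi_\theta(x))_l=\beta_l+\sum_{j\in V_1}\psi(\beta_j+\sum_{i\in V_0}x_iw_{ij})w_{jl}$; $w_{j\bullet}=(w_{jl})_{l\in V_2}$, $w_{\bullet j}=(w_{ij})_{i\in V_0}$; $\mathcal{X}$ is the support of the distribution of $X$. Redundancy types: $\theta$ has a deactivation redundancy if $w_{k\bullet}=0$ for some $k\in V_1$; a bias redundancy if for some $k\in V_1$ the function $x\mapsto\psi(\beta_k+\sum_ix_iw_{ik})$ is constant on $\mathcal{X}$; a duplication redundancy if $(w_{\bullet j},\beta_j)=(w_{\bullet k},\beta_k)$ for some $j\neq k\in V_1$. *)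

(* Defs.v *)
From HB Require Import structures.
From mathcomp Require Import all_boot all_order all_algebra.
From mathcomp Require Import all_classical all_reals all_analysis.
Set Implicit Arguments. Unset Strict Implicit. Unset Printing Implicit Defensive.
Import Order.TTheory GRing.Theory Num.Theory.
Import numFieldNormedType.Exports.
Local Open Scope classical_set_scope.
Local Open Scope ring_scope.

(* Parameters theta = (w, beta) of a shallow network with
   V0 = 'I_n0, V1 = 'I_n1, V2 = 'I_n2:
   theta = ((W1, W2), (b1, b2)) with
   W1 i j = w_{ij} (i in V0, j in V1), W2 j l = w_{jl} (j in V1, l in V2),
   b1 j = beta_j (j in V1), b2 0 l = beta_l (l in V2). *)
Definition param (R : realType) (n0 n1 n2 : nat) : Type :=
  ('M[R]_(n0, n1) * 'M[R]_(n1, n2)) * ('rV[R]_n1 * 'rV[R]_n2).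

Definition W1 {R : realType} {n0 n1 n2} (th : param R n0 n1 n2) := th.1.1.
Definition W2 {R : realType} {n0 n1 n2} (th : param R n0 n1 n2) := th.1.2.
Definition b1 {R : realType} {n0 n1 n2} (th : param R n0 n1 n2) := th.2.1.
Definition b2 {R : realType} {n0 n1 n2} (th : param R n0 n1 n2) := th.2.2.

Definition preact {R : realType} {n0 n1 n2} (th : param R n0 n1 n2)
  (x : 'rV[R]_n0) (j : 'I_n1) : R :=
  b1 th 0 j + \sum_(i < n0) x 0 i * W1 th i j.

Definition response {R : realType} {n0 n1 n2} (psi : R -> R)
  (th : param R n0 n1 n2) (x : 'rV[R]_n0) : 'rV[R]_n2 :=
  \row_(l < n2) (b2 th 0 l + \sum_(j < n1) psi (preact th x j) * W2 th j l).

Definition dist_support {R : realType} {d} {T : measurableType d} {n0}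
  (P : probability T R) (X : T -> 'rV[R]_n0) : set 'rV[R]_n0 :=
  [set x | forall e : R, 0 < e -> (0 < P (X @^-1` ball x e))%E].

Definition deactivation_redundancy {R : realType} {n0 n1 n2}
  (th : param R n0 n1 n2) : Prop :=
  exists k : 'I_n1, forall l : 'I_n2, W2 th k l = 0.

Definition bias_redundancy {R : realType} {n0 n1 n2} (psi : R -> R)
  (Xsupp : set 'rV[R]_n0) (th : param R n0 n1 n2) : Prop :=
  exists k : 'I_n1, exists c : R,
    forall x, Xsupp x -> psi (preact th x k) = c.

Definition duplication_redundancy {R : realType} {n0 n1 n2}
  (th : param R n0 n1 n2) : Prop :=
  exists j k : 'I_n1, j <> k /\
    (forall i : 'I_n0, W1 th i j = W1 th i k) /\ b1 th 0 j = b1 th 0 k.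

Definition critical_point {R : realType} {n0 n1 n2}
  (J : param R n0 n1 n2 -> R) (th : param R n0 n1 n2) : Prop :=
  forall v : param R n0 n1 n2, 'd J th v = 0.

Definition theta_path {R : realType} {n0 n1 n2} (th : param R n0 n1 n2)
  (lam0 : R) (lam : 'rV[R]_n1) (t : R) : param R n0 n1 n2 :=
  ((W1 th, \matrix_(j < n1, k < n2) (W2 th j k + t * lam 0 j)),
   (b1 th, \row_(k < n2) (b2 th 0 k + t * lam0))).

(* Main.v *)
Require Import Defs.
From HB Require Import structures.
From mathcomp Require Import all_boot all_order all_algebra.
From mathcomp Require Import all_classical all_reals all_analysis.
From mathcomp Require Import ring lra measurable_realfun.
Import Order.TTheory GRing.Theory Num.Theory.
Import numFieldNormedType.Exports.
Local Open Scope classical_set_scope.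
Local Open Scope ring_scope.

Section Deriv.
Variables (R : realType) (n0 n1 n2 : nat) (psi : R -> R).
Hypothesis dpsi : forall z, derivable psi z 1.

Definition pv (v : param R n0 n1 n2) (x : 'rV[R]_n0) j :=
  b1 v 0 j + \sum_(i < n0) x 0 i * W1 v i j.

Definition dresp (th : param R n0 n1 n2) x v : 'rV[R]_n2 :=
  \row_l (b2 v 0 l + \sum_(j < n1) (derive psi (preact th x j) 1 * pv v x j * W2 th j l
        + psi (preact th x j) * W2 v j l)).

Lemma preact_shift th v x j (h : R) :
  preact (h *: v + th) x j = preact th x j + h * pv v x j.
Proof.
rewrite /preact /pv /b1 /W1 /= !mxE.
have -> : \sum_(i < n0) x 0 i * (h *: v.1.1 + th.1.1) i j =
  \sum_(i < n0) x 0 i * th.1.1 i j + h * \sum_(i < n0) x 0 i * v.1.1 i j.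
  rewrite mulr_sumr -big_split /=; apply: eq_bigr => i _; rewrite !mxE; lra.
lra.
Qed.

Lemma resp_entry th v x l (h : R) :
  response psi (h *: v + th) x 0 l = b2 th 0 l + h * b2 v 0 l +
    \sum_(j < n1) psi (preact th x j + h * pv v x j) * (W2 th j l + h * W2 v j l).
Proof.
rewrite /response mxE /b2 /W2 /= !mxE; congr (_ + _); first lra.
apply: eq_bigr => j _; rewrite preact_shift !mxE; congr (_ * _); lra.
Qed.

Lemma is_derive_ext (f g : R -> R) (d : R) :
  f = g -> is_derive (0:R) 1 f d -> is_derive (0:R) 1 g d.
Proof. by move=> ->. Qed.

Lemma is_derive_aff (a c : R) : is_derive (0:R) 1 (fun h => a + h * c) c.
Proof.
apply: DeriveDef.
  apply: derivableD; first exact: derivable_cst.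
  apply: (@derivableM _ _ id (cst c)); [exact: derivable_id | exact: derivable_cst].
rewrite deriveD; [|exact: derivable_cst|].
  rewrite derive_cst add0r.
  rewrite (@deriveM _ _ id (cst c)); [|exact: derivable_id | exact: derivable_cst].
  by rewrite derive_cst derive_id /= scaler0 add0r -[c%:A]/(c * 1) mulr1.
apply: (@derivableM _ _ id (cst c)); [exact: derivable_id | exact: derivable_cst].
Qed.

Lemma is_derive_psi (a c : R) :
  is_derive (0:R) 1 (fun h => psi (a + h * c)) (derive psi a 1 * c).
Proof.
have H := @is_derive1_comp R psi (fun h => a + h * c) 0 (derive psi a 1) c.
have E : a + 0 * c = a by lra.
apply: H; last exact: is_derive_aff.
rewrite E; exact: derivableP.
Qed.

Lemma is_derive_prod (f g : R -> R) df dg :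
  is_derive (0:R) 1 f df -> is_derive (0:R) 1 g dg ->
  is_derive (0:R) 1 (fun h => f h * g h) (f 0 * dg + g 0 * df).
Proof. move=> Hf Hg; exact: (@is_deriveM _ _ f g 0 1 df dg). Qed.

Lemma is_derive_add (f g : R -> R) df dg :
  is_derive (0:R) 1 f df -> is_derive (0:R) 1 g dg ->
  is_derive (0:R) 1 (fun h => f h + g h) (df + dg).
Proof. move=> Hf Hg; exact: (@is_deriveD _ _ _ f g 0 1 df dg). Qed.

Lemma is_derive_bsum m (f : 'I_m -> R -> R) df :
  (forall i, is_derive (0:R) 1 (f i) (df i)) ->
  is_derive (0:R) 1 (fun h => \sum_(i < m) f i h) (\sum_(i < m) df i).
Proof.
move=> H; rewrite -fct_sumE; exact: is_derive_sum.
Qed.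

Lemma is_derive_entry th v x l :
  is_derive (0:R) 1 (fun h => response psi (h *: v + th) x 0 l) (dresp th x v 0 l).
Proof.
apply: (@is_derive_ext (fun h => (b2 th 0 l + h * b2 v 0 l) +
    \sum_(j < n1) psi (preact th x j + h * pv v x j) * (W2 th j l + h * W2 v j l))).
  by apply/funext => h; rewrite resp_entry.
rewrite /dresp mxE.
apply: is_derive_add; first exact: is_derive_aff.
apply: is_derive_bsum => j.
have := @is_derive_prod _ _ _ _ (is_derive_psi (preact th x j) (pv v x j)) (is_derive_aff (W2 th j l) (W2 v j l)).
have -> : preact th x j + 0 * pv v x j = preact th x j by lra.
have -> : W2 th j l + 0 * W2 v j l = W2 th j l by lra.
move=> H; apply: is_derive_eq H _; lra.
Qed.

Lemma chain th v x (g : 'rV[R]_n2 -> R) : (forall a, differentiable g a) ->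
  derive (fun u => g (response psi u x)) th v = 'd g (response psi th x) (dresp th x v).
Proof.
move=> dg.
pose r := fun h : R => response psi (h *: v + th) x.
have Er : derive (fun u => g (response psi u x)) th v = derive (g \o r) 0 1.
  rewrite /derive.
  have -> : (fun h : R => h^-1 *: (((fun u => g (response psi u x)) \o shift th) (h *: v)
      - g (response psi th x))) = (fun h : R => h^-1 *: (((g \o r) \o shift 0) (h *: 1) - (g \o r) 0)).
    apply: funext => h /=.
    by rewrite /r /= scale0r add0r addr0 -[h *: (1:R)]/(h * 1) mulr1.
  by [].
have rD : derivable r 0 1.
  apply/derivable_mxP => i j; rewrite (ord1 i).
  by have [] := is_derive_entry th v x j.
have dr : derive r 0 1 = dresp th x v.
  rewrite derive_mx //; apply/matrixP => i j; rewrite [LHS]mxE (ord1 i).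
  by have [_ E] := is_derive_entry th v x j; exact: E.
have r0 : r 0 = response psi th x by rewrite /r scale0r add0r.
have rd : differentiable r 0 by apply/derivable1_diffP.
rewrite Er deriveE; last by apply: differentiable_comp; [exact: rd | rewrite r0; exact: dg].
rewrite (diff_comp rd (dg _)) /=.
rewrite -(deriveE _ rd) dr r0. done.
Qed.

Definition cc (lam0 : R) (lam : 'rV[R]_n1) (th : param R n0 n1 n2) x :=
  lam0 + \sum_(j < n1) lam 0 j * psi (preact th x j).

Definition dc (lam : 'rV[R]_n1) (th : param R n0 n1 n2) x v :=
  \sum_(j < n1) lam 0 j * derive psi (preact th x j) 1 * pv v x j.

Lemma preact_path (th : param R n0 n1 n2) (lam0 t : R) (lam : 'rV[R]_n1) (x : 'rV[R]_n0) j :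
  preact (theta_path th lam0 lam t) x j = preact th x j.
Proof. by []. Qed.

Lemma resp_path (th : param R n0 n1 n2) (lam0 t : R) (lam : 'rV[R]_n1) (x : 'rV[R]_n0) :
  response psi (theta_path th lam0 lam t) x =
  response psi th x + (t * cc lam0 lam th x) *: const_mx 1.
Proof.
apply/matrixP => i l; rewrite (ord1 i) !mxE.
rewrite (eq_bigr (fun j => psi (preact th x j) * W2 th j l + t * (lam 0 j * psi (preact th x j)))); last first.
  by move=> j _; rewrite preact_path /W2 /theta_path /= mxE; ring.
rewrite big_split -mulr_sumr /=.
rewrite /cc; ring.
Qed.

Lemma dresp_path (th : param R n0 n1 n2) (lam0 t : R) (lam : 'rV[R]_n1) (x : 'rV[R]_n0) (v : param R n0 n1 n2) :
  dresp (theta_path th lam0 lam t) x v =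
  dresp th x v + (t * dc lam th x v) *: const_mx 1.
Proof.
apply/matrixP => i l; rewrite (ord1 i) !mxE /dc.
rewrite (eq_bigr (fun j => (derive psi (preact th x j) 1 * pv v x j * W2 th j l + psi (preact th x j) * W2 v j l) +
     t * (lam 0 j * derive psi (preact th x j) 1 * pv v x j))); last first.
  by move=> j _; rewrite /W2 /theta_path /= !mxE; ring.
rewrite big_split -mulr_sumr /=.
ring.
Qed.

Definition vprime (th : param R n0 n1 n2) (l0 : 'I_n2) (lam : 'rV[R]_n1)
  (v : param R n0 n1 n2) : param R n0 n1 n2 :=
  ((\matrix_(i < n0, j < n1) (W1 v i j * lam 0 j / W2 th j l0), 0),
   (\row_j (b1 v 0 j * lam 0 j / W2 th j l0), 0)).

Lemma dresp_vprime (th : param R n0 n1 n2) l0 lam v x :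
  (forall j, W2 th j l0 != 0) ->
  dresp th x (vprime th l0 lam v) 0 l0 = dc lam th x v.
Proof.
move=> hW; rewrite /dresp /dc mxE /b2 /vprime /= mxE add0r.
apply: eq_bigr => j _.
have -> : pv (vprime th l0 lam v) x j = pv v x j * lam 0 j / W2 th j l0.
  rewrite /pv /vprime /b1 /W1 /= mxE.
  rewrite (eq_bigr (fun i => x 0 i * W1 v i j * (lam 0 j / W2 th j l0))); last first.
    by move=> i _; rewrite mxE /W1; rewrite !mulrA.
  rewrite -mulr_suml /W1 /=. field. exact: hW.
rewrite /W2 /= mxE mulr0 addr0. field. exact: hW.
Qed.
End Deriv.

Lemma ball_rowP (R : realType) n (c y : 'rV[R]_n) e :
  ball c e y <-> (0 < e /\ forall j, `|c 0 j - y 0 j| < e).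
Proof.
split.
- case=> e0 H; split => // j; have := H 0 j. by rewrite /ball /=.
- case=> e0 H; split => // i j; rewrite (ord1 i); exact: H.
Qed.

Lemma mball (R : realType) d (T : measurableType d) n (X : T -> 'rV[R]_n)
  (hX : forall i, measurable_fun setT (fun w => X w 0 i)) (c : 'rV[R]_n) r :
  measurable (X @^-1` ball c r).
Proof.
have [r0|r0] := ltP 0 r; last first.
  suff -> : X @^-1` ball c r = set0 by [].
  apply/seteqP; split => // w /= /ball_rowP [] h; lra.
have -> : X @^-1` ball c r = \bigcap_(j in [set: 'I_n]) [set w | `|c 0 j - X w 0 j| < r].
  apply/seteqP; split => w /=.
    by move=> /ball_rowP [_ H] j _; exact: H.
  by move=> H; apply/ball_rowP; split => // j; exact: H.
apply: fin_bigcap_measurable; first exact: finite_finset.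
move=> j _.
have mf : measurable_fun setT (fun w => `|c 0 j - X w 0 j|).
  apply: measurableT_comp; first exact: normr_measurable.
  apply: measurable_funB; [exact: measurable_cst | exact: hX].
have := mf measurableT [set` `]-oo, r[] (measurable_itv _).
rewrite setTI; congr measurable; apply/seteqP; split => w /=; by rewrite in_itv.
Qed.

Lemma floor_approx (R : realType) (K x : R) : 0 < K ->
  `|(Num.floor (K * x))%:~R / K - x| < K^-1.
Proof.
move=> K0; set f : R := (Num.floor (K * x))%:~R.
have h1 : f <= K * x by exact: Num.Theory.floor_le.
have h2 : K * x < f + 1.
  by have := Num.Theory.floorD1_gt (K * x); rewrite intrD.
have -> : f / K - x = (f - K * x) / K by field; rewrite gt_eqF.
rewrite normrM normfV (gtr0_norm K0) -[X in _ < X]mul1r ltr_pM2r ?invr_gt0 //.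
rewrite ler0_norm; [lra | lra].
Qed.

Lemma ae_supp (R : realType) d (T : measurableType d) (P : probability T R) n
  (X : T -> 'rV[R]_n)
  (hX : forall i, measurable_fun setT (fun w => X w 0 i)) :
  P.-negligible (~` [set w | dist_support P X (X w)]).
Proof.
pose B (kz : nat * 'rV[int]_n) := X @^-1` ball (\row_j ((kz.2 0 j)%:~R / (kz.1.+1)%:R : R)) (kz.1.+1%:R^-1).
have mB kz : measurable (B kz) by exact: mball.
pose F (m : nat) := match unpickle m with
  | Some kz => if P (B kz) == 0%E then B kz else set0 | None => set0 end.
apply: (@negligibleS _ _ _ _ (\bigcup_m F m)); last first.
  apply: negligible_bigcup => m; rewrite /F.
  case: (unpickle m) => [kz|]; last exact: negligible_set0.
  case: eqP => h; last exact: negligible_set0.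
  by exists (B kz); split.
move=> w /= Hns.
have [e e0 He] : exists2 e : R, 0 < e & P (X @^-1` ball (X w) e) = 0%E.
  apply: contrapT => Hc; apply: Hns => e e0.
  rewrite lt0e measure_ge0 andbT; apply/eqP => h; apply: Hc; by exists e.
pose k := Num.truncn (2 / e).
pose K : R := k.+1%:R.
have K0 : 0 < K by rewrite /K ltr0Sn.
have hK : 2 / K < e.
  have := Num.Theory.truncnS_gt (2 / e); rewrite -/k -/K => h.
  rewrite ltr_pdivrMr // mulrC -ltr_pdivrMr //.
pose z : 'rV[int]_n := \row_j Num.floor (K * X w 0 j).
have Hc j : `|(z 0 j)%:~R / K - X w 0 j| < K^-1 by rewrite mxE; exact: floor_approx.
have Bw : B (k, z) w.
  rewrite /B /=; apply/ball_rowP; split; first by rewrite invr_gt0.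
  by move=> j; rewrite mxE.
have sub : B (k, z) `<=` X @^-1` ball (X w) e.
  move=> y; rewrite /B /= => /ball_rowP [_ Hy]; apply/ball_rowP; split => // j.
  have := Hy j; rewrite mxE => Hyj.
  have := Hc j => Hcj.
  have E : X w 0 j - X y 0 j = - ((z 0 j)%:~R / K - X w 0 j) + ((z 0 j)%:~R / K - X y 0 j) by ring.
  rewrite E (le_lt_trans (ler_normD _ _)) // normrN.
  apply: (@lt_trans _ _ (K^-1 + K^-1)); first exact: ltrD.
  by rewrite -mulr2n -mulr_natl.
have P0 : P (B (k, z)) = 0%E.
  apply/eqP; rewrite -measure_le0 -He le_measure ?inE //; exact: mball.
exists (pickle (k, z)) => //.
by rewrite /F pickleK P0 eqxx.
Qed.

Lemma aux1 (R : realType) (A B C t : R) : C = A + t * (B - A) -> A = 0 -> B = A -> C = 0.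
Proof. by move=> -> -> ->; rewrite subrr mulr0 addr0. Qed.

Lemma aux2 (R : realType) (A B t1 t2 : R) : A + t1 * (B - A) = 0 -> A + t2 * (B - A) = 0 ->
  ~ (A = 0 /\ B = A) -> t1 = t2.
Proof.
move=> e1 e2 H.
have [hb|hb] := eqVneq (B - A) 0.
  exfalso; apply: H; move: e1; rewrite hb mulr0 addr0 => e1; split => //.
  by apply/eqP; rewrite -subr_eq0; apply/eqP.
have : (t1 - t2) * (B - A) = 0 by rewrite mulrBl; lra.
by move/eqP; rewrite mulf_eq0 (negbTE hb) orbF subr_eq0 => /eqP.
Qed.

Lemma aux3 (R : realType) (A B C : R) : ((B%:E - A%:E)%E = C%:E) -> C = 0 -> B = A.
Proof.
move=> h hc; have h0 : (B - A)%:E = (0:R)%:E by rewrite EFinB h hc.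
have h1 := EFin_inj h0.
by apply/eqP; rewrite -subr_eq0 h1.
Qed.

Lemma aux4 (R : realType) (a b c : \bar R) (A B C : R) :
  a = A%:E -> b = B%:E -> c = C%:E -> (b - a)%E = c -> C = 0 -> B = A.
Proof. move=> -> -> -> h; exact: aux3 h. Qed.

Theorem theorem4p2 (R : realType) (n0 n1 n2 : nat) (psi : R -> R)
  (d : measure_display) (T : measurableType d) (P : probability T R)
  (X : T -> 'rV[R]_n0) (Y : T -> 'rV[R]_n2)
  (loss : 'rV[R]_n2 -> 'rV[R]_n2 -> R) (J : param R n0 n1 n2 -> R)
  (th : param R n0 n1 n2) (lam0 : R) (lam : 'rV[R]_n1) :
  (* psi is differentiable *)
  (forall z : R, derivable psi z 1) ->
  (* X and Y are random variables *)
  (forall i : 'I_n0, measurable_fun setT (fun w => X w 0 i)) ->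
  (forall k : 'I_n2, measurable_fun setT (fun w => Y w 0 k)) ->
  (* loss : R^V2 x R^V2 -> [0, oo) is C^1 *)
  (forall a b, 0 <= loss a b) ->
  (forall p : 'rV[R]_n2 * 'rV[R]_n2,
      differentiable (fun q : 'rV[R]_n2 * 'rV[R]_n2 => loss q.1 q.2) p) ->
  (forall v : 'rV[R]_n2 * 'rV[R]_n2,
      continuous (fun p : 'rV[R]_n2 * 'rV[R]_n2 =>
        'd (fun q : 'rV[R]_n2 * 'rV[R]_n2 => loss q.1 q.2) p v)) ->
  (* J(theta) = E[loss(Psi_theta(X), Y)] *)
  (forall th' : param R n0 n1 n2,
      (\int[P]_w (loss (response psi th' (X w)) (Y w))%:E = (J th')%:E)%E) ->
  (* J is C^1 on Theta *)
  (forall th' : param R n0 n1 n2, differentiable J th') ->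
  (forall v : param R n0 n1 n2, continuous (fun th' => 'd J th' v)) ->
  (* differentiation and integration can be interchanged *)
  (forall (th' v : param R n0 n1 n2),
      P.-integrable setT
        (fun w => (derive (fun u => loss (response psi u (X w)) (Y w)) th' v)%:E)
      /\ (\int[P]_w
            (derive (fun u => loss (response psi u (X w)) (Y w)) th' v)%:E
          = ('d J th' v)%:E)%E) ->
  (* theta has a bias or duplication redundancy *)
  (bias_redundancy psi (dist_support P X) th \/ duplication_redundancy th) ->
  (* lambda <> 0 and the linear relation holds on the support of X *)
  (lam0 <> 0 \/ lam <> 0) ->
  (forall x, dist_support P X x ->
      lam0 + \sum_(j < n1) lam 0 j * psi (preact th x j) = 0) ->
  ((forall t : R, critical_point J (theta_path th lam0 lam t))
   \/ (forall t1 t2 : R, critical_point J (theta_path th lam0 lam t1) ->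
                        critical_point J (theta_path th lam0 lam t2) -> t1 = t2))
  /\
  (n2 = 1%N -> ~ deactivation_redundancy th -> critical_point J th ->
     forall t : R, critical_point J (theta_path th lam0 lam t)).
Proof.
move=> dpsi hX hY loss0 dloss cdloss hJ dJ cdJ hint hred hlam hrel.
pose g (y : 'rV[R]_n2) := fun a : 'rV[R]_n2 => loss a y.
have dg : forall y a, differentiable (g y) a.
  move=> y a.
  have -> : g y = (fun q : 'rV[R]_n2 * 'rV[R]_n2 => loss q.1 q.2) \o (fun a => (a, y)) by [].
  apply: differentiable_comp; last exact: dloss.
  apply: differentiable_pair; last exact: differentiable_cst.
  exact: ex_diff.
pose D (th' v : param R n0 n1 n2) w := derive (fun u => loss (response psi u (X w)) (Y w)) th' v.
have HD : forall th' v w, D th' v w =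
    'd (g (Y w)) (response psi th' (X w)) (dresp _ _ _ _ psi th' (X w) v).
  move=> th' v w; exact: (@chain R n0 n1 n2 psi dpsi th' v (X w) (g (Y w)) (dg (Y w))).
pose supp w := dist_support P X (X w).
have aeP : forall Q : T -> Prop, (forall w, supp w -> Q w) -> {ae P, forall w, Q w}.
  move=> Q HQ; change (P.-negligible (~` [set w | Q w])).
  have HN := @ae_supp R d T P n0 X hX; apply: (negligibleS _ HN) => w /= nQ; apply: contrapT => Hs.
  apply: nQ; apply: HQ; exact: contrapT.
have cc0 : forall w, supp w -> cc _ _ _ _ psi lam0 lam th (X w) = 0.
  by move=> w Hw; exact: hrel.
pose th1 := theta_path th lam0 lam 1.
have pt : forall t v w, supp w ->
    D (theta_path th lam0 lam t) v w = D th v w + t * (D th1 v w - D th v w).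
  move=> t v w Hw; rewrite !HD /th1 !resp_path cc0 // !mulr0 scale0r addr0.
  rewrite !dresp_path !linearD !linearZ /=.
  have sE : forall a b : R, a *: b = a * b by [].
  rewrite !sE; ring.
have iD : forall th' v, P.-integrable setT (fun w => (D th' v w)%:E).
  by move=> th' v; exact: (hint th' v).1.
have eD : forall th' v, (\int[P]_w (D th' v w)%:E = ('d J th' v)%:E)%E.
  by move=> th' v; exact: (hint th' v).2.
have key : forall t v, 'd J (theta_path th lam0 lam t) v =
    'd J th v + t * ('d J th1 v - 'd J th v).
  move=> t v; apply: EFin_inj; rewrite -eD.
  have iB : P.-integrable setT (fun w => ((D th1 v w)%:E - (D th v w)%:E)%E).
    exact: integrableB.
  have iZ : P.-integrable setT (fun w => (t%:E * ((D th1 v w)%:E - (D th v w)%:E))%E).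
    exact: integrableZl.
  have iS : P.-integrable setT (fun w => ((D th v w)%:E + t%:E * ((D th1 v w)%:E - (D th v w)%:E))%E).
    exact: integrableD.
  transitivity (\int[P]_w ((D th v w)%:E + t%:E * ((D th1 v w)%:E - (D th v w)%:E)))%E.
    apply: ae_eq_integral => //.
    - exact: measurable_int (iD _ _).
    - exact: measurable_int iS.
    - apply: aeP => w Hw _; rewrite pt //.
  rewrite (integralD measurableT (iD th v) iZ) (integralZl measurableT iB).
  rewrite (integralB measurableT (iD th1 v) (iD th v)).
  by rewrite !eD EFinD EFinM EFinB.
have th1E : th1 = theta_path th lam0 lam 1 by [].
clearbody th1.
split.
  case: (pselect (forall v, 'd J th v = 0 /\ 'd J th1 v = 'd J th v)) => [Hall|Hn].
    left => t v; have [h1 h2] := Hall v.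
    exact: (@aux1 _ _ _ _ _ (key t v) h1 h2).
  right => t1 t2 c1 c2.
  have [v Hv] : exists v, ~ ('d J th v = 0 /\ 'd J th1 v = 'd J th v).
    apply: contrapT => H; apply: Hn => v; apply: contrapT => Hv; apply: H; by exists v.
  exact: (@aux2 _ _ _ _ _ (eq_trans (esym (key t1 v)) (c1 v)) (eq_trans (esym (key t2 v)) (c2 v)) Hv).
move=> E12 nodeact crit t v.
have l0 : 'I_n2 by rewrite E12; exact: ord0.
have ol : forall l : 'I_n2, l = l0.
  move=> l; apply: val_inj => /=.
  have hl : (val l < 1)%N by rewrite -E12; exact: ltn_ord.
  have hl0 : (val l0 < 1)%N by rewrite -E12; exact: ltn_ord.
  by move: hl hl0; rewrite !ltnS !leqn0 => /eqP -> /eqP ->.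
have hW : forall j, W2 th j l0 != 0.
  move=> j; apply/eqP => h; apply: nodeact; exists j => l; by rewrite (ol l).
pose v' := vprime R n0 n1 n2 th l0 lam v.
have hv' : forall w, dresp R n0 n1 n2 psi th (X w) v' =
    dc R n0 n1 n2 psi lam th (X w) v *: const_mx 1.
  move=> w; apply/matrixP => i l; rewrite (ord1 i) (ol l).
  rewrite (dresp_vprime _ _ _ _ _ _ _ _ _ _ (hW)) !mxE; by rewrite mulr1.
have pt2 : forall w, supp w -> D th1 v w - D th v w = D th v' w.
  move=> w Hw; rewrite !HD th1E resp_path cc0 // mulr0 scale0r addr0.
  rewrite dresp_path linearD linearZ hv' linearZ /=.
  have sE : forall a b : R, a *: b = a * b by [].
  rewrite !sE; ring.
have I : (\int[P]_w (D th1 v w)%:E - \int[P]_w (D th v w)%:E = \int[P]_w (D th v' w)%:E)%E.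
  rewrite -integralB //.
  apply: ae_eq_integral => //.
  - exact: measurable_int (integrableB measurableT (iD th1 v) (iD th v)).
  - exact: measurable_int (iD _ _).
  - by apply: aeP => w Hw _; rewrite /= -pt2 // EFinB.
exact: (@aux1 _ _ _ _ _ (key t v) (crit v) (@aux4 _ _ _ _ _ _ _ (eD th v) (eD th1 v) (eD th v') I (crit v'))).
Qed.
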